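(* Let $k\ge1$, let $N$ be a power of $2$, let $A \geq 2$, and let $f_0,\dots,f_k:[N]\to\mathbb{C}$ be bounded in magnitude by $1$, extended by zero outside $[N]$. Then $$ \sum_{n:\, N/A \le 2^n \le N}\ \sum_{j=0}^{N/2^n-1} 2^{-n}\Big| \sum_{x,t\in\mathbb{Z}} f_0(x)f_1(x+t)\cdots f_k(x+kt)\,\psi(t/2^n)\,\varphi(2^{-n}x-j)\Big| \leq C\, N^{1/2}(\log A) \inf_{0\le i\le k}\|f_i\|_{\ell^2([N])},$$ with $C$ depending only on $k,\psi,\varphi$.
   Context: $[N] := \{1,\dots,N\}$; $n$ ranges over nonnegative integers. Fix a smooth odd function $\psi:\mathbb{R}\to\mathbb{R}$ supported on $[-2,-1/2]\cup[1/2,2]$ with $\sum_{n\in\mathbb{Z}} 2^{-n}\psi(2^{-n}t) = \frac1t$ for $t \neq 0$, and a smooth $\varphi:\mathbb{R}\to\mathbb{R}$ supported on $[-1,1]$ with $\sum_{j \in \mathbb{Z}} \varphi(x-j) = 1$ for all $x \in \mathbb{R}$. *)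

(* Defs.v *)
From Stdlib Require Import Reals Lra Lia ZArith List.
Open Scope R_scope.

Definition Cx : Type := (R * R)%type.
Definition C0 : Cx := (0, 0).
Definition Cadd (a b : Cx) : Cx := (fst a + fst b, snd a + snd b).
Definition Cmul (a b : Cx) : Cx :=
  (fst a * fst b - snd a * snd b, fst a * snd b + snd a * fst b).
Definition Cscale (r : R) (a : Cx) : Cx := (r * fst a, r * snd a).
Definition Cmod (a : Cx) : R := sqrt (fst a ^ 2 + snd a ^ 2).

Fixpoint Cprod (k : nat) (g : nat -> Cx) : Cx :=
  match k with
  | O => g O
  | S k' => Cmul (Cprod k' g) (g (S k'))
  end.

(* integers a, a+1, ..., b (empty if b < a) *)
Definition Zrange (a b : Z) : list Z :=
  map (fun i => (a + Z.of_nat i)%Z) (seq 0 (Z.to_nat (b - a + 1))).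

Definition CsumZ (a b : Z) (g : Z -> Cx) : Cx :=
  fold_right Cadd C0 (map g (Zrange a b)).

Definition Rsum_lt (n : nat) (g : nat -> R) : R :=
  fold_right Rplus 0 (map g (seq 0 n)).

Definition RsumZ (a b : Z) (g : Z -> R) : R :=
  fold_right Rplus 0 (map g (Zrange a b)).

(* extension by zero outside [N] = {1,...,N} *)
Definition ext (N : Z) (f : Z -> Cx) (x : Z) : Cx :=
  if andb (1 <=? x)%Z (x <=? N)%Z then f x else C0.

(* C^infinity: a sequence of successive derivatives exists everywhere *)
Definition smooth (g : R -> R) : Prop :=
  exists d : nat -> R -> R, d O = g /\
    forall (n : nat) (x : R), derivable_pt_lim (d n) x (d (S n) x).

(* symmetric partial sums over m in [-M, M] of a Z-indexed real family *)
Definition symsum (g : Z -> R) (M : nat) : R :=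
  RsumZ (- Z.of_nat M) (Z.of_nat M) g.

Definition psi_hyp (psi : R -> R) : Prop :=
  smooth psi /\
  (forall t, psi (- t) = - psi t) /\
  (forall t, psi t <> 0 -> 1/2 <= Rabs t <= 2) /\
  (forall t, t <> 0 ->
     Un_cv (symsum (fun n => powerRZ 2 (- n) * psi (powerRZ 2 (- n) * t))) (1 / t)).

Definition phi_hyp (phi : R -> R) : Prop :=
  smooth phi /\
  (forall x, phi x <> 0 -> Rabs x <= 1) /\
  (forall x, Un_cv (symsum (fun j => phi (x - IZR j))) 1).

Definition l2norm (N : Z) (f : Z -> Cx) : R :=
  sqrt (RsumZ 1 N (fun x => Cmod (f x) ^ 2)).

(* inner sum over x, t in Z; f 0 supported in [1,N] and f 1 (x+t) forces
   |t| <= N-1, so (for k >= 1) the sum over x in [1,N], t in [-N,N] is the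
   full sum over Z x Z. *)
Definition inner (k : nat) (psi phi : R -> R) (f : nat -> Z -> Cx)
    (N : Z) (n : nat) (j : nat) : Cx :=
  CsumZ 1 N (fun x => CsumZ (- N) N (fun t =>
    Cscale (psi (IZR t / 2 ^ n) * phi (IZR x / 2 ^ n - INR j))
      (Cprod k (fun i => ext N (f i) (x + Z.of_nat i * t)%Z)))).

(* LHS with N = 2^m: n ranges over nat with N/A <= 2^n <= N *)
Definition lhs (k : nat) (psi phi : R -> R) (f : nat -> Z -> Cx)
    (m : nat) (A : R) : R :=
  let N := (2 ^ Z.of_nat m)%Z in
  Rsum_lt (S m) (fun n =>
    if Rle_dec (IZR N / A) (2 ^ n) then
      if Rle_dec (2 ^ n) (IZR N) then
        Rsum_lt (2 ^ (m - n))%nat (fun j =>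
          / 2 ^ n * Cmod (inner k psi phi f N n j))
      else 0
    else 0).

(* Main.v *)
Require Import Defs.
From Stdlib Require Import Reals ZArith Lra Lia List Psatz.
Open Scope R_scope.

Definition lsum {A : Type} (l : list A) (g : A -> R) : R :=
  fold_right Rplus 0 (map g l).

Lemma lsum_nil {A} (g : A -> R) : lsum nil g = 0.
Proof. reflexivity. Qed.
Lemma lsum_cons {A} (a : A) l g : lsum (a :: l) g = g a + lsum l g.
Proof. reflexivity. Qed.

Lemma lsum_app {A} (l1 l2 : list A) g : lsum (l1 ++ l2) g = lsum l1 g + lsum l2 g.
Proof. induction l1; [simpl; unfold lsum; simpl; lra|]. simpl. rewrite !lsum_cons, IHl1. lra. Qed.

Lemma lsum_le {A} (l : list A) g h :
  (forall x, In x l -> g x <= h x) -> lsum l g <= lsum l h.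
Proof.
  induction l; intros H; [unfold lsum; simpl; lra|]. rewrite !lsum_cons.
  apply Rplus_le_compat; [apply H; now left| apply IHl; intros; apply H; now right].
Qed.

Lemma lsum_ext {A} (l : list A) g h :
  (forall x, In x l -> g x = h x) -> lsum l g = lsum l h.
Proof.
  induction l; intros H; [reflexivity|]. rewrite !lsum_cons.
  rewrite H by now left. rewrite IHl; auto. intros; apply H; now right.
Qed.

Lemma lsum_nonneg {A} (l : list A) g :
  (forall x, In x l -> 0 <= g x) -> 0 <= lsum l g.
Proof.
  intros H. replace 0 with (lsum l (fun _ => 0)).
  apply lsum_le; auto. induction l; auto. rewrite lsum_cons, IHl; [lra|].
  intros; apply H; now right.
Qed.

Lemma lsum_plus {A} (l : list A) g h :
  lsum l (fun x => g x + h x) = lsum l g + lsum l h.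
Proof. induction l; [unfold lsum; simpl; lra|]. rewrite !lsum_cons, IHl. lra. Qed.

Lemma lsum_scal {A} (l : list A) c g :
  lsum l (fun x => c * g x) = c * lsum l g.
Proof. induction l; simpl; [unfold lsum; simpl; lra|]. rewrite !lsum_cons, IHl. lra. Qed.

Lemma lsum_scal_r {A} (l : list A) c g :
  lsum l (fun x => g x * c) = lsum l g * c.
Proof. rewrite <- (Rmult_comm c), <- lsum_scal. apply lsum_ext; intros; lra. Qed.

Lemma lsum_const {A} (l : list A) c : lsum l (fun _ => c) = INR (length l) * c.
Proof. induction l; [simpl; unfold lsum; simpl; lra|]. rewrite lsum_cons, IHl.
  simpl length. rewrite S_INR. lra. Qed.

Lemma lsum_swap {A B} (l1 : list A) (l2 : list B) g :
  lsum l1 (fun x => lsum l2 (fun y => g x y)) = lsum l2 (fun y => lsum l1 (fun x => g x y)).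
Proof.
  induction l1.
  - rewrite lsum_nil. rewrite (lsum_ext l2 _ (fun _ => 0)) by reflexivity.
    rewrite lsum_const; lra.
  - rewrite lsum_cons, IHl1. rewrite <- lsum_plus. apply lsum_ext; intros.
    rewrite lsum_cons; reflexivity.
Qed.

Lemma lsum_ge_elem {A} (l : list A) h y :
  In y l -> (forall x, In x l -> 0 <= h x) -> h y <= lsum l h.
Proof.
  induction l; intros Hy H; [destruct Hy|]. rewrite lsum_cons. destruct Hy as [<-|Hy].
  - assert (0 <= lsum l h) by (apply lsum_nonneg; intros; apply H; now right). lra.
  - assert (h y <= lsum l h) by (apply IHl; auto; intros; apply H; now right).
    assert (0 <= h a) by (apply H; now left). lra.
Qed.

Lemma count_seq_strong K h M lo hi : 0 <= M ->
  (forall i, (i < K)%nat -> 0 <= h i <= M) ->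
  (forall i, (i < K)%nat -> h i <> 0 -> lo <= INR i <= hi) ->
  lsum (seq 0 K) h <= M * Rmax 0 (Rmin (INR K) (hi + 1) - lo).
Proof.
  intros HM. induction K; intros Hb Hs.
  - simpl. unfold lsum; simpl. assert (0 <= Rmax 0 (Rmin 0 (hi+1) - lo)) by apply Rmax_l. nra.
  - rewrite seq_S, lsum_app. simpl (0 + K)%nat. rewrite lsum_cons, lsum_nil.
    assert (IH : lsum (seq 0 K) h <= M * Rmax 0 (Rmin (INR K) (hi + 1) - lo)).
    { apply IHK; intros; [apply Hb|apply Hs]; auto; lia. }
    rewrite S_INR.
    destruct (Req_dec (h K) 0) as [E|E].
    + rewrite E. assert (Rmax 0 (Rmin (INR K) (hi + 1) - lo) <= Rmax 0 (Rmin (INR K + 1) (hi + 1) - lo)).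
      { unfold Rmax, Rmin. repeat destruct Rle_dec; lra. }
      nra.
    + specialize (Hs K ltac:(lia) E). specialize (Hb K ltac:(lia)).
      assert (Rmin (INR K) (hi+1) = INR K) by (apply Rmin_left; lra).
      assert (Rmin (INR K + 1) (hi+1) = INR K + 1) by (apply Rmin_left; lra).
      rewrite H, H0 in *. rewrite !Rmax_right in * by lra. nra.
Qed.

Lemma count_seq K h M lo hi : 0 <= M ->
  (forall i, (i < K)%nat -> 0 <= h i <= M) ->
  (forall i, (i < K)%nat -> h i <> 0 -> lo <= INR i <= hi) ->
  lsum (seq 0 K) h <= M * Rmax 0 (hi + 1 - lo).
Proof.
  intros HM Hb Hs. eapply Rle_trans; [apply count_seq_strong; eauto|].
  apply Rmult_le_compat_l; auto. unfold Rmax, Rmin. repeat destruct Rle_dec; lra.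
Qed.

Lemma Zrange_lsum a b g :
  lsum (Zrange a b) g = lsum (seq 0 (Z.to_nat (b - a + 1))) (fun i => g (a + Z.of_nat i)%Z).
Proof. unfold lsum, Zrange. rewrite map_map. reflexivity. Qed.

Lemma in_Zrange a b y : In y (Zrange a b) -> (a <= y <= b)%Z.
Proof.
  unfold Zrange. intros H. apply in_map_iff in H. destruct H as [i [<- Hi]].
  apply in_seq in Hi. lia.
Qed.

Lemma Zrange_in a b y : (a <= y <= b)%Z -> In y (Zrange a b).
Proof.
  intros H. unfold Zrange. apply in_map_iff. exists (Z.to_nat (y - a)).
  split; [lia|]. apply in_seq. lia.
Qed.

Lemma Zrange_length a b : length (Zrange a b) = Z.to_nat (b - a + 1).
Proof. unfold Zrange. rewrite length_map, length_seq. reflexivity. Qed.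

Lemma count_Z a b h M lo hi : 0 <= M ->
  (forall y, 0 <= h y <= M) ->
  (forall y, h y <> 0 -> lo <= IZR y <= hi) ->
  lsum (Zrange a b) h <= M * Rmax 0 (hi + 1 - lo).
Proof.
  intros HM Hb Hs. rewrite Zrange_lsum.
  replace (hi + 1 - lo) with ((hi - IZR a) + 1 - (lo - IZR a)) by ring.
  apply count_seq; auto. intros i _ Hi. apply Hs in Hi.
  rewrite plus_IZR, <- INR_IZR_INZ in Hi. lra.
Qed.

Lemma Cmod_ge0 a : 0 <= Cmod a.
Proof. apply sqrt_pos. Qed.

Lemma Cmod_C0 : Cmod C0 = 0.
Proof. unfold Cmod. replace (fst C0 ^2 + snd C0 ^2) with 0 by (simpl; ring). apply sqrt_0. Qed.

Lemma Cmod_add a b : Cmod (Cadd a b) <= Cmod a + Cmod b.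
Proof.
  destruct a as [a1 a2], b as [b1 b2]; unfold Cmod, Cadd; cbn [fst snd].
  set (A := a1^2+a2^2). set (B := b1^2+b2^2).
  assert (hA : 0 <= A) by (unfold A; nra). assert (hB : 0 <= B) by (unfold B; nra).
  pose proof (sqrt_sqrt A hA) as sA. pose proof (sqrt_sqrt B hB) as sB.
  pose proof (sqrt_pos A). pose proof (sqrt_pos B).
  set (x := sqrt A) in *. set (y := sqrt B) in *.
  assert (Hc : (a1*b1+a2*b2)^2 <= (x*y)^2).
  { replace ((x*y)^2) with ((x*x)*(y*y)) by ring. rewrite sA, sB. unfold A, B. pose proof (pow2_ge_0 (a1*b2-a2*b1)); nra. }
  assert (Hd : a1*b1+a2*b2 <= x*y). { assert (0 <= x*y) by nra. destruct (Rle_dec (a1*b1+a2*b2) (x*y)) as [r|r]; auto. exfalso. assert (Hp: 0 < (a1*b1+a2*b2 - x*y)*(a1*b1+a2*b2 + x*y)) by (apply Rmult_lt_0_compat; lra). nra. }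
  rewrite <- (sqrt_pow2 (x+y)) by lra. apply sqrt_le_1_alt.
  replace ((x+y)^2) with (x*x + y*y + 2*(x*y)) by ring. rewrite sA, sB. unfold A, B. nra.
Qed.

Lemma Cmod_mul a b : Cmod (Cmul a b) = Cmod a * Cmod b.
Proof.
  destruct a as [a1 a2], b as [b1 b2]; unfold Cmod, Cmul; simpl.
  rewrite <- sqrt_mult by nra. f_equal. ring.
Qed.

Lemma Cmod_scale r a : Cmod (Cscale r a) = Rabs r * Cmod a.
Proof.
  destruct a as [a1 a2]; unfold Cmod, Cscale; simpl.
  rewrite <- sqrt_Rsqr_abs, <- sqrt_mult by (unfold Rsqr; nra). f_equal. unfold Rsqr. ring.
Qed.

Lemma Cmod_fold (l : list Z) (g : Z -> Cx) :
  Cmod (fold_right Cadd C0 (map g l)) <= lsum l (fun x => Cmod (g x)).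
Proof.
  induction l; simpl.
  - rewrite Cmod_C0. unfold lsum; simpl; lra.
  - rewrite lsum_cons. eapply Rle_trans; [apply Cmod_add|]. lra.
Qed.

Lemma Cmod_CsumZ a b g : Cmod (CsumZ a b g) <= RsumZ a b (fun x => Cmod (g x)).
Proof. apply Cmod_fold. Qed.

Lemma Cprod_le1 k g : (forall i, (i <= k)%nat -> Cmod (g i) <= 1) -> Cmod (Cprod k g) <= 1.
Proof.
  induction k; intros H; simpl; [apply H; lia|].
  rewrite Cmod_mul. pose proof (Cmod_ge0 (Cprod k g)). pose proof (Cmod_ge0 (g (S k))).
  assert (Cmod (Cprod k g) <= 1) by (apply IHk; intros; apply H; lia).
  assert (Cmod (g (S k)) <= 1) by (apply H; lia). nra.
Qed.

Lemma Cprod_le k g i : (i <= k)%nat -> (forall i, (i <= k)%nat -> Cmod (g i) <= 1) ->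
  Cmod (Cprod k g) <= Cmod (g i).
Proof.
  induction k; intros Hi H; simpl.
  - replace i with O by lia. lra.
  - rewrite Cmod_mul. pose proof (Cmod_ge0 (Cprod k g)). pose proof (Cmod_ge0 (g (S k))).
    destruct (Nat.eq_dec i (S k)) as [->|ne].
    + assert (Cmod (Cprod k g) <= 1) by (apply Cprod_le1; intros; apply H; lia). nra.
    + assert (Cmod (Cprod k g) <= Cmod (g i)) by (apply IHk; [lia| intros; apply H; lia]).
      assert (Cmod (g (S k)) <= 1) by (apply H; lia). nra.
Qed.

Lemma smooth_bounded g c : smooth g -> (forall x, g x <> 0 -> Rabs x <= c) ->
  exists M, 0 <= M /\ forall x, Rabs (g x) <= M.
Proof.
  intros [d [Hd0 Hd]] Hs.
  assert (Hc : forall x, continuity_pt (fun y => Rabs (g y)) x).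
  { intros x. apply (continuity_pt_comp g Rabs x).
    - apply derivable_continuous_pt. subst g. exists (d 1%nat x). apply Hd.
    - apply Rcontinuity_abs. }
  destruct (continuity_ab_maj (fun y => Rabs (g y)) (- Rabs c) (Rabs c)) as [Mx [H1 H2]].
  { pose proof (Rabs_pos c); lra. }
  { intros; apply Hc. }
  exists (Rabs (g Mx)). split; [apply Rabs_pos|]. intros x.
  destruct (Req_dec (g x) 0) as [E|E].
  - rewrite E, Rabs_R0. apply Rabs_pos.
  - apply H1. apply Hs in E. pose proof (Rle_abs c). pose proof (Rle_abs x). pose proof (Rabs_Ropp x). pose proof (Rle_abs (-x)). lra.
Qed.

Lemma cauchy_schwarz {A} (l : list A) a : (forall x, In x l -> 0 <= a x) ->
  lsum l a <= sqrt (INR (length l)) * sqrt (lsum l (fun x => a x ^ 2)).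
Proof.
  intros Ha. set (S1 := lsum l a). set (S2 := lsum l (fun x => a x ^ 2)).
  assert (h1 : 0 <= S1) by (apply lsum_nonneg; auto).
  assert (h2 : 0 <= S2) by (apply lsum_nonneg; intros; nra).
  assert (hN : 0 <= INR (length l)) by apply pos_INR.
  rewrite <- sqrt_mult by auto. rewrite <- (sqrt_pow2 S1) by auto. apply sqrt_le_1_alt.
  assert (E1 : S1 ^ 2 = lsum l (fun x => lsum l (fun y => a x * a y))).
  { unfold S1. transitivity (lsum l (fun x => a x * lsum l a)).
    - rewrite lsum_scal_r. ring.
    - apply lsum_ext; intros. rewrite lsum_scal. reflexivity. }
  rewrite E1.
  eapply Rle_trans.
  { apply (lsum_le _ _ (fun x => lsum l (fun y => (a x ^ 2 + a y ^ 2) / 2))).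
    intros; apply lsum_le; intros y _. pose proof (pow2_ge_0 (a x - a y)). nra. }
  rewrite (lsum_ext _ _ (fun x => (/2 * a x ^ 2) * INR (length l) + /2 * S2)).
  2:{ intros. rewrite (lsum_ext _ _ (fun y => /2 * a x ^ 2 + /2 * (a y ^ 2))) by (intros; lra).
      rewrite lsum_plus, lsum_const, lsum_scal. fold S2. lra. }
  rewrite lsum_plus, lsum_scal_r, lsum_scal, lsum_const. fold S2. nra.
Qed.

Lemma ext_in N g y : (1 <= y <= N)%Z -> ext N g y = g y.
Proof. intros H. unfold ext. destruct (Z.leb_spec 1 y); destruct (Z.leb_spec y N); simpl; auto; lia. Qed.



Lemma ext_out N g y : ~ (1 <= y <= N)%Z -> ext N g y = C0.
Proof. intros H. unfold ext. destruct (Z.leb_spec 1 y); destruct (Z.leb_spec y N); simpl; auto; lia. Qed.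

Definition ind (z y : Z) : R := if Z.eq_dec z y then 1 else 0.

Lemma shift_le N (G : Z -> R) c :
  (forall y, 0 <= G y) -> (forall y, ~ (1 <= y <= N)%Z -> G y = 0) ->
  lsum (Zrange 1 N) (fun x => G (x + c)%Z) <= lsum (Zrange 1 N) G.
Proof.
  intros Gp Gs.
  eapply Rle_trans.
  { apply (lsum_le _ _ (fun x => lsum (Zrange 1 N) (fun z => G z * ind z (x + c)%Z))).
    intros x _. destruct (Z_le_dec 1 (x + c)) as [h1|h1]; [destruct (Z_le_dec (x+c) N) as [h2|h2]|].
    - eapply Rle_trans; [| apply (lsum_ge_elem _ _ (x + c)%Z)].
      + unfold ind. destruct Z.eq_dec; [lra|congruence].
      + apply Zrange_in; lia.
      + intros; unfold ind; destruct Z.eq_dec; pose proof (Gp x0); lra.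
    - rewrite Gs by lia. apply lsum_nonneg; intros; unfold ind; destruct Z.eq_dec; pose proof (Gp x0); lra.
    - rewrite Gs by lia. apply lsum_nonneg; intros; unfold ind; destruct Z.eq_dec; pose proof (Gp x0); lra. }
  rewrite lsum_swap. apply lsum_le. intros z _. rewrite lsum_scal.
  assert (lsum (Zrange 1 N) (fun x => ind z (x + c)%Z) <= 1).
  { eapply Rle_trans.
    - apply (count_Z 1 N _ 1 (IZR (z - c)) (IZR (z - c))); [lra| |].
      + intros; unfold ind; destruct Z.eq_dec; lra.
      + intros y Hy. unfold ind in Hy. destruct Z.eq_dec; [|lra]. subst z.
        replace (y + c - c)%Z with y by ring. lra.
    - rewrite Rmax_right by lra. lra. }
  pose proof (Gp z). nra.
Qed.

Lemma per_n (k : nat) (psi phi : R -> R) (Mpsi Mphi : R)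
 (Mpsi0 : 0 <= Mpsi) (Mphi0 : 0 <= Mphi)
 (Hpsi : forall t, Rabs (psi t) <= Mpsi) (Hphi : forall t, Rabs (phi t) <= Mphi)
 (Spsi : forall t, psi t <> 0 -> Rabs t <= 2) (Sphi : forall t, phi t <> 0 -> Rabs t <= 1)
 (f : nat -> Z -> Cx) (N : Z) (i : nat) (n K : nat) :
  (forall i x, (i <= k)%nat -> (1 <= x <= N)%Z -> Cmod (f i x) <= 1) ->
  (i <= k)%nat ->
  lsum (seq 0 K) (fun j => / 2 ^ n * Cmod (inner k psi phi f N n j)) <=
  15 * Mphi * Mpsi * lsum (Zrange 1 N) (fun x => Cmod (f i x)).
Proof.
  intros Hf Hi.
  set (G := fun y => Cmod (ext N (f i) y)).
  set (X := Zrange 1 N). set (T := Zrange (- N) N). set (J := seq 0 K).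
  set (Psi := fun t : Z => Rabs (psi (IZR t / 2 ^ n))).
  set (Phi := fun (j : nat) (x : Z) => Rabs (phi (IZR x / 2 ^ n - INR j))).
  assert (p2 : 0 < 2 ^ n) by (apply pow_lt; lra).
  assert (Gp : forall y, 0 <= G y) by (intros; apply Cmod_ge0).
  assert (Psp : forall t, 0 <= Psi t) by (intros; apply Rabs_pos).
  assert (Php : forall j x, 0 <= Phi j x) by (intros; apply Rabs_pos).
  assert (E1 : forall j, Cmod (inner k psi phi f N n j) <=
     lsum X (fun x => lsum T (fun t => Psi t * G (x + Z.of_nat i * t)%Z * Phi j x))).
  { intros j. unfold inner. eapply Rle_trans; [apply Cmod_CsumZ|].
    apply lsum_le; intros x Hx. eapply Rle_trans; [apply Cmod_CsumZ|].
    apply lsum_le; intros t Ht. rewrite Cmod_scale, Rabs_mult.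
    unfold Psi, Phi, G.
    assert (Cmod (Cprod k (fun i0 => ext N (f i0) (x + Z.of_nat i0 * t)%Z)) <=
            Cmod (ext N (f i) (x + Z.of_nat i * t)%Z)).
    { apply (Cprod_le k (fun i0 => ext N (f i0) (x + Z.of_nat i0 * t)%Z) i Hi).
      intros i0 Hi0. destruct (Z_le_dec 1 (x + Z.of_nat i0 * t)); [destruct (Z_le_dec (x + Z.of_nat i0 * t) N)|].
      - rewrite ext_in by lia. apply Hf; auto; lia.
      - rewrite ext_out by lia. rewrite Cmod_C0; lra.
      - rewrite ext_out by lia. rewrite Cmod_C0; lra. }
    pose proof (Rabs_pos (psi (IZR t / 2 ^ n))). pose proof (Rabs_pos (phi (IZR x / 2 ^ n - INR j))).
    match goal with |- ?a * ?b * ?c <= _ => replace (Rabs (psi (IZR t / 2 ^ n)) * Cmod (ext N (f i) (x + Z.of_nat i * t)%Z) * Rabs (phi (IZR x / 2 ^ n - INR j))) with (a * b * Cmod (ext N (f i) (x + Z.of_nat i * t)%Z)) by ring end.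
    apply Rmult_le_compat_l; [apply Rmult_le_pos; auto | auto]. }
  assert (CPhi : forall x, lsum J (fun j => Phi j x) <= 3 * Mphi).
  { intros x. eapply Rle_trans.
    - apply (count_seq K (fun j => Phi j x) Mphi (IZR x / 2 ^ n - 1) (IZR x / 2 ^ n + 1)); auto.
      + intros j _. split; auto. apply Hphi.
      + intros j _ Hj. unfold Phi in Hj.
        assert (phi (IZR x / 2 ^ n - INR j) <> 0) by (intro E; apply Hj; rewrite E; apply Rabs_R0).
        apply Sphi in H. unfold Rabs in H. destruct Rcase_abs in H; lra.
    - rewrite Rmax_right by lra. lra. }
  assert (CPsi : lsum T Psi <= Mpsi * (4 * 2 ^ n + 1)).
  { eapply Rle_trans.
    - apply (count_Z (- N) N Psi Mpsi (- (2 * 2 ^ n)) (2 * 2 ^ n)); auto.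
      + intros; split; auto. apply Hpsi.
      + intros t Ht. unfold Psi in Ht.
        assert (psi (IZR t / 2 ^ n) <> 0) by (intro E; apply Ht; rewrite E; apply Rabs_R0).
        apply Spsi in H. unfold Rdiv in H. rewrite Rabs_mult, (Rabs_right (/ 2 ^ n)) in H.
        2:{ left. apply Rinv_0_lt_compat. lra. }
        apply (Rmult_le_compat_r (2 ^ n)) in H; [|lra].
        rewrite Rmult_assoc, Rinv_l in H by lra.
        unfold Rabs in H. destruct Rcase_abs in H; lra.
    - rewrite Rmax_right by lra. lra. }
  set (L1 := lsum X (fun x => Cmod (f i x))).
  assert (EL : lsum X G = L1).
  { apply lsum_ext. intros x Hx. apply in_Zrange in Hx. unfold G. rewrite ext_in; auto. }
  assert (Sh : forall t, lsum X (fun x => G (x + Z.of_nat i * t)%Z) <= L1).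
  { intros t. rewrite <- EL. apply shift_le; auto. intros y Hy. unfold G. rewrite ext_out; auto. apply Cmod_C0. }
  assert (L1p : 0 <= L1) by (apply lsum_nonneg; intros; apply Cmod_ge0).
  eapply Rle_trans.
  { apply (lsum_le _ _ (fun j => / 2 ^ n * lsum X (fun x => lsum T (fun t => Psi t * G (x + Z.of_nat i * t)%Z * Phi j x)))).
    intros j _. apply Rmult_le_compat_l; [left; apply Rinv_0_lt_compat; lra| apply E1]. }
  rewrite lsum_scal, lsum_swap.
  eapply Rle_trans.
  { apply Rmult_le_compat_l; [left; apply Rinv_0_lt_compat; lra|].
    apply (lsum_le _ _ (fun x => lsum T (fun t => Psi t * (3 * Mphi) * G (x + Z.of_nat i * t)%Z))).
    intros x _. rewrite lsum_swap. apply lsum_le. intros t _. rewrite lsum_scal.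
    specialize (CPhi x). pose proof (Psp t). pose proof (Gp (x + Z.of_nat i * t)%Z). assert (0 <= Psi t * G (x + Z.of_nat i * t)%Z) by nra. nra. }
  rewrite lsum_swap.
  eapply Rle_trans.
  { apply Rmult_le_compat_l; [left; apply Rinv_0_lt_compat; lra|].
    apply (lsum_le _ _ (fun t => Psi t * (3 * Mphi * L1))).
    intros t _. rewrite lsum_scal. specialize (Sh t). pose proof (Psp t). assert (0 <= Psi t * (3 * Mphi)) by nra. nra. }
  rewrite lsum_scal_r.
  assert (HH : lsum T Psi * (3 * Mphi * L1) <= Mpsi * (4 * 2 ^ n + 1) * (3 * Mphi * L1)).
  { apply Rmult_le_compat_r; auto. nra. }
  assert (HI : / 2 ^ n <= 1).
  { rewrite <- Rinv_1. apply Rinv_le_contravar; [lra|]. apply pow_R1_Rle. lra. }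
  assert (/ 2 ^ n * (Mpsi * (4 * 2 ^ n + 1) * (3 * Mphi * L1)) = (4 + / 2 ^ n) * (3 * Mpsi * Mphi * L1)).
  { field. lra. }
  assert (0 <= Mpsi * Mphi * L1) by (apply Rmult_le_pos; [nra|auto]).
  assert (0 < / 2 ^ n) by (apply Rinv_0_lt_compat; lra).
  nra.
Qed.


Lemma ln_le_mono x y : 0 < x -> x <= y -> ln x <= ln y.
Proof. intros Hx [H|H]; [left; apply ln_increasing; auto| subst; lra]. Qed.

Theorem lemma3p2 :
  forall (k : nat) (psi phi : R -> R),
    (1 <= k)%nat -> psi_hyp psi -> phi_hyp phi ->
    exists C : R,
      forall (m : nat) (A : R) (f : nat -> Z -> Cx),
        2 <= A ->
        (forall i x, (i <= k)%nat -> (1 <= x <= 2 ^ Z.of_nat m)%Z ->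
           Cmod (f i x) <= 1) ->
        forall i, (i <= k)%nat ->
          lhs k psi phi f m A <=
          C * sqrt (IZR (2 ^ Z.of_nat m)) * ln A
            * l2norm (2 ^ Z.of_nat m) (f i).
Proof.
  intros k psi phi Hk [Hsm [_ [Hsupp _]]] [Hsmphi [Hsuppphi _]].
  assert (Spsi : forall t, psi t <> 0 -> Rabs t <= 2) by (intros t Ht; apply Hsupp in Ht; lra).
  destruct (smooth_bounded psi 2 Hsm Spsi) as [Mpsi [Mpsi0 Hpsi]].
  destruct (smooth_bounded phi 1 Hsmphi Hsuppphi) as [Mphi [Mphi0 Hphi]].
  pose proof ln_lt_2 as Hln2.
  exists (15 * Mphi * Mpsi * 2 / ln 2).
  intros m A f HA Hf i Hi.
  set (N := (2 ^ Z.of_nat m)%Z) in *.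
  assert (HN0 : (0 <= N)%Z) by (apply Z.pow_nonneg; lia).
  assert (HNR : IZR N = 2 ^ m) by (unfold N; rewrite <- pow_IZR; reflexivity).
  set (l2 := l2norm N (f i)).
  assert (l2p : 0 <= l2) by apply sqrt_pos.
  set (Bnd := 15 * Mphi * Mpsi * (sqrt (IZR N) * l2)).
  assert (Bp : 0 <= Bnd).
  { unfold Bnd. apply Rmult_le_pos; [nra|]. apply Rmult_le_pos; auto. apply sqrt_pos. }
  assert (HL1 : lsum (Zrange 1 N) (fun x => Cmod (f i x)) <= sqrt (IZR N) * l2).
  { eapply Rle_trans; [apply cauchy_schwarz; intros; apply Cmod_ge0|].
    rewrite Zrange_length. replace (N - 1 + 1)%Z with N by ring.
    rewrite INR_IZR_INZ, Z2Nat.id by auto. apply Rle_refl. }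
  assert (Hper : forall n K, lsum (seq 0 K) (fun j => / 2 ^ n * Cmod (inner k psi phi f N n j)) <= Bnd).
  { intros n K. eapply Rle_trans.
    - apply (per_n k psi phi Mpsi Mphi Mpsi0 Mphi0 Hpsi Hphi Spsi Hsuppphi f N i n K); auto.
    - unfold Bnd. apply Rmult_le_compat_l; auto. nra. }
  assert (lnA2 : ln 2 <= ln A) by (apply ln_le_mono; lra).
  set (Xl := ln A / ln 2).
  assert (Xl0 : 0 <= Xl) by (unfold Xl; unfold Rdiv; apply Rmult_le_pos; [lra|left; apply Rinv_0_lt_compat; lra]).
  unfold lhs. fold N. change (Rsum_lt (S m) ?g) with (lsum (seq 0 (S m)) g).
  eapply Rle_trans.
  { apply (count_seq _ _ Bnd (INR m - Xl) (INR m)); auto.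
    - intros n _. destruct Rle_dec; [destruct Rle_dec|]; try (split; lra).
      split; [|apply Hper]. apply lsum_nonneg. intros j _.
      apply Rmult_le_pos; [left; apply Rinv_0_lt_compat, pow_lt; lra | apply Cmod_ge0].
    - intros n Hn Hne. split; [|apply le_INR; lia].
      destruct Rle_dec as [r|r]; [|congruence].
      rewrite HNR in r. assert (0 < 2 ^ n) by (apply pow_lt; lra).
      assert (2 ^ m <= A * 2 ^ n).
      { apply (Rmult_le_compat_r A) in r; [|lra]. unfold Rdiv in r.
        rewrite Rmult_assoc, Rinv_l, Rmult_1_r in r by lra. lra. }
      apply ln_le_mono in H0; [|apply pow_lt; lra].
      rewrite ln_mult, !ln_pow in H0 by lra.
      unfold Xl. apply (Rmult_le_reg_r (ln 2)); [lra|].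
      unfold Rdiv. rewrite Rmult_minus_distr_r, Rmult_assoc, Rinv_l by lra. lra. }
  rewrite Rmax_right by lra.
  replace (INR m + 1 - (INR m - Xl)) with (Xl + 1) by ring.
  assert (Xl + 1 <= 2 * ln A / ln 2).
  { unfold Xl. apply (Rmult_le_reg_r (ln 2)); [lra|]. unfold Rdiv.
    rewrite Rmult_plus_distr_r, !Rmult_assoc, Rinv_l by lra. lra. }
  replace (15 * Mphi * Mpsi * 2 / ln 2 * sqrt (IZR N) * ln A * l2) with (Bnd * (2 * ln A / ln 2))
    by (unfold Bnd; field; lra).
  apply Rmult_le_compat_l; auto.
Qed.
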